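(* Let $\mathcal{A}:\mathbb{C}^{m\times n}\to\mathbb{C}^p$ be linear with rank-restricted isometry constant $\delta_r(\mathcal{A})$. Let $\Psi,\Upsilon\subset\mathbb{O}$ be sets of atoms and $X\in\mathbb{C}^{m\times n}$ such that $\mathcal{P}_\Upsilon^\perp\mathcal{P}_\Psi=\mathcal{P}_\Psi\mathcal{P}_\Upsilon^\perp$, $\mathcal{P}_\Upsilon^\perp X=0$, and $|\Psi|\le r$. Then $\|\mathcal{P}_\Upsilon^\perp\mathcal{P}_\Psi\mathcal{A}^*\mathcal{A}\mathcal{P}_\Psi X\|_F\le\sqrt2\,\delta_r(\mathcal{A})\|\mathcal{P}_\Psi X\|_F$.
   Context: $\mathbb{C}^p$ has inner product $\langle x,y\rangle=y^Hx$ and norm $\|\cdot\|_2$; $\mathbb{C}^{m\times n}$ has inner product $\langle X,Y\rangle=\mathrm{tr}(Y^HX)$ and Frobenius norm $\|\cdot\|_F$; $\mathcal{A}^*$ is the adjoint of $\mathcal{A}$. $\delta_r(\mathcal{A})$ is the smallest $\delta\ge0$ such that $(1-\delta)\|X\|_F^2\le\|\mathcal{A}X\|_2^2\le(1+\delta)\|X\|_F^2$ for all $X$ with $\mathrm{rank}(X)\le r$. The set of atoms $\mathbb{O}$ is a set of unit-Frobenius-norm rank-one matrices in $\mathbb{C}^{m\times n}$ such that every nonzero rank-one matrix is a scalar multiple of exactly one element of $\mathbb{O}$. For $\Psi\subset\mathbb{O}$, $\mathcal{P}_\Psi$ is the orthogonal projection onto $\mathrm{span}(\Psi)$ and $\mathcal{P}_\Psi^\perp=I-\mathcal{P}_\Psi$.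 *)

(* Defs.v *)
(* matrices over C := R[i] for an arbitrary real closed field R
   (R = the reals gives C = the complex numbers). *)
From HB Require Import structures.
From mathcomp Require Import all_boot all_order all_algebra.
From mathcomp Require Import complex.
Set Implicit Arguments. Unset Strict Implicit. Unset Printing Implicit Defensive.
Import Order.TTheory GRing.Theory Num.Theory.
Local Open Scope ring_scope.

Section Defs.
Variable R : rcfType.
Local Notation C := R[i].

Definition ctr (m n : nat) (X : 'M[C]_(m, n)) : 'M[C]_(n, m) :=
  (map_mx (@conjc R) X)^T.

Definition minner (m n : nat) (X Y : 'M[C]_(m, n)) : C := \tr (ctr Y *m X).
Definition vinner (p : nat) (x y : 'cV[C]_p) : C := (ctr y *m x) 0 0.

Definition frob (m n : nat) (X : 'M[C]_(m, n)) : R := Num.sqrt (@complex.Re R (minner X X)).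
Definition norm2 (p : nat) (x : 'cV[C]_p) : R := Num.sqrt (@complex.Re R (vinner x x)).

Definition is_adjoint (m n p : nat) (A : 'M[C]_(m, n) -> 'cV[C]_p)
  (Astar : 'cV[C]_p -> 'M[C]_(m, n)) : Prop :=
  forall X y, vinner (A X) y = minner X (Astar y).

Definition rip_bound (m n p r : nat) (A : 'M[C]_(m, n) -> 'cV[C]_p) (d : R) : Prop :=
  0 <= d /\ forall X : 'M[C]_(m, n), (\rank X <= r)%N ->
    (1 - d) * frob X ^+ 2 <= norm2 (A X) ^+ 2 <= (1 + d) * frob X ^+ 2.

Definition is_rip_const (m n p r : nat) (A : 'M[C]_(m, n) -> 'cV[C]_p) (d : R) : Prop :=
  rip_bound r A d /\ forall d', rip_bound r A d' -> d <= d'.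

Definition atom_set (m n : nat) (O : 'M[C]_(m, n) -> Prop) : Prop :=
  (forall a, O a -> \rank a = 1%N /\ frob a = 1) /\
  (forall Y : 'M[C]_(m, n), \rank Y = 1%N ->
     exists a, (O a /\ exists c : C, Y = c *: a) /\
       forall b, (O b /\ exists c : C, Y = c *: b) -> b = a).

Definition in_span (m n : nat) (S : 'M[C]_(m, n) -> Prop) (Y : 'M[C]_(m, n)) : Prop :=
  exists (k : nat) (v : 'I_k -> 'M[C]_(m, n)) (c : 'I_k -> C),
    (forall i, S (v i)) /\ Y = \sum_(i < k) c i *: v i.

Definition is_orth_proj (m n : nat) (S : 'M[C]_(m, n) -> Prop)
  (P : 'M[C]_(m, n) -> 'M[C]_(m, n)) : Prop :=
  forall X, in_span S (P X) /\ forall Z, in_span S Z -> minner (X - P X) Z = 0.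

Definition card_le (m n : nat) (S : 'M[C]_(m, n) -> Prop) (r : nat) : Prop :=
  exists s : seq 'M[C]_(m, n), (size s <= r)%N /\ forall x, S x <-> x \in s.

End Defs.

(* Main.v *)
Require Import Defs.
From HB Require Import structures.
From mathcomp Require Import all_boot all_order all_algebra.
From mathcomp Require Import complex.
From mathcomp Require Import ring lra.
Import Order.TTheory GRing.Theory Num.Theory.
Set Implicit Arguments. Unset Strict Implicit.
Local Open Scope ring_scope.

Section S.
Variable R : rcfType.
Local Notation cRe := (@complex.Re R).
Local Notation cIm := (@complex.Im R).
Local Notation C := R[i].
Lemma ReD (x y : R[i]) : cRe (x + y) = cRe x + cRe y.
Proof. by case: x => a b; case: y => c d. Qed.
Lemma ImD (x y : R[i]) : cIm (x + y) = cIm x + cIm y.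
Proof. by case: x => a b; case: y => c d. Qed.
Lemma ReN (x : R[i]) : cRe (- x) = - cRe x.
Proof. by case: x => a b. Qed.
Lemma ImN (x : R[i]) : cIm (- x) = - cIm x.
Proof. by case: x => a b. Qed.
Lemma ReCM (x y : R[i]) : cRe (conjc y * x) = cRe x * cRe y + cIm x * cIm y.
Proof. case: x => a b; case: y => c d /=. ring. Qed.
Lemma ReR (t : R) (x : R[i]) : cRe ((t%:C)%C * x) = t * cRe x.
Proof. case: x => a b /=. ring. Qed.
Lemma ImR (t : R) (x : R[i]) : cIm ((t%:C)%C * x) = t * cIm x.
Proof. case: x => a b /=. ring. Qed.

Definition rin {m n} (X Y : 'M[C]_(m, n)) := cRe (minner X Y).

Lemma rinE m n (X Y : 'M[C]_(m, n)) : rin X Y =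
  \sum_(i < m) \sum_(j < n) (cRe (X i j) * cRe (Y i j) + cIm (X i j) * cIm (Y i j)).
Proof.
rewrite /rin /minner /mxtrace.
rewrite (big_morph cRe ReD (_ : cRe 0 = 0)) //.
rewrite exchange_big /=; apply: eq_bigr => j _.
rewrite !mxE (big_morph cRe ReD (_ : cRe 0 = 0)) //.
by apply: eq_bigr => k _; rewrite /ctr !mxE ReCM.
Qed.

Lemma rinDl m n (X Y Z : 'M[C]_(m, n)) : rin (X + Y) Z = rin X Z + rin Y Z.
Proof.
rewrite !rinE -big_split; apply: eq_bigr => i _; rewrite -big_split.
by apply: eq_bigr => j _; rewrite !mxE ReD ImD /=; ring.
Qed.
Lemma rinNl m n (X Z : 'M[C]_(m, n)) : rin (- X) Z = - rin X Z.
Proof.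
rewrite !rinE -sumrN; apply: eq_bigr => i _; rewrite -sumrN.
by apply: eq_bigr => j _; rewrite !mxE ReN ImN; ring.
Qed.
Lemma rinZl m n (t : R) (X Z : 'M[C]_(m, n)) : rin ((t%:C)%C *: X) Z = t * rin X Z.
Proof.
rewrite !rinE mulr_sumr; apply: eq_bigr => i _; rewrite mulr_sumr.
by apply: eq_bigr => j _; rewrite !mxE ReR ImR; ring.
Qed.
Lemma rinC m n (X Z : 'M[C]_(m, n)) : rin X Z = rin Z X.
Proof.
rewrite !rinE; apply: eq_bigr => i _.
by apply: eq_bigr => j _; ring.
Qed.
Lemma rinBl m n (X Y Z : 'M[C]_(m, n)) : rin (X - Y) Z = rin X Z - rin Y Z.
Proof. by rewrite rinDl rinNl. Qed.
Lemma rinDr m n (X Y Z : 'M[C]_(m, n)) : rin Z (X + Y) = rin Z X + rin Z Y.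
Proof. by rewrite rinC rinDl !(rinC Z). Qed.
Lemma rinBr m n (X Y Z : 'M[C]_(m, n)) : rin Z (X - Y) = rin Z X - rin Z Y.
Proof. by rewrite rinC rinBl !(rinC Z). Qed.
Lemma rinZr m n (t : R) (X Z : 'M[C]_(m, n)) : rin Z ((t%:C)%C *: X) = t * rin Z X.
Proof. by rewrite rinC rinZl rinC. Qed.
Lemma rin_ge0 m n (X : 'M[C]_(m, n)) : 0 <= rin X X.
Proof.
rewrite rinE; apply: sumr_ge0 => i _; apply: sumr_ge0 => j _; nra.
Qed.
Lemma rin_eq0 m n (X : 'M[C]_(m, n)) : rin X X = 0 -> X = 0.
Proof.
rewrite rinE => /eqP; rewrite psumr_eq0; last first.
  by move=> i _; apply: sumr_ge0 => j _; nra.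
move=> /allP H; apply/matrixP => i j; rewrite mxE.
have := H i (mem_index_enum _); rewrite psumr_eq0; last by move=> k _; nra.
move=> /allP /(_ j (mem_index_enum _)) /eqP.
case: (X i j) => a b /= h.
have ha : a = 0 by nra.
have hb : b = 0 by nra.
by rewrite ha hb.
Qed.
Lemma rin_expand m n (t : R) (X Y : 'M[C]_(m, n)) :
  rin (X + (t%:C)%C *: Y) (X + (t%:C)%C *: Y) =
  rin X X + 2 * t * rin X Y + t ^+ 2 * rin Y Y.
Proof.
rewrite !rinDl !rinDr !rinZl !rinZr (rinC Y X); ring.
Qed.
Lemma frobE m n (X : 'M[C]_(m, n)) : frob X ^+ 2 = rin X X.
Proof. by rewrite /frob sqr_sqrtr // rin_ge0. Qed.
Lemma frob_ge0 m n (X : 'M[C]_(m, n)) : 0 <= frob X.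
Proof. exact: sqrtr_ge0. Qed.
Lemma vinnerE p (x y : 'cV[C]_p) : vinner x y = minner x y.
Proof. by rewrite /minner /mxtrace big_ord1. Qed.
Lemma norm2E p (x : 'cV[C]_p) : norm2 x ^+ 2 = rin x x.
Proof. by rewrite /norm2 vinnerE sqr_sqrtr // rin_ge0. Qed.

Definition ssum m n (s : seq 'M[C]_(m, n)) : 'M[C]_n :=
  foldr (fun x acc => (x + acc)%MS) (0 : 'M_n) s.

Lemma ssum_sup m n (s : seq 'M[C]_(m, n)) x : x \in s -> (x <= ssum s)%MS.
Proof.
elim: s => [|y s IH] //=; rewrite inE => /orP [/eqP -> | hx].
  exact: addsmxSl.
exact: (submx_trans (IH hx) (addsmxSr _ _)).
Qed.

Lemma ssum_rank m n (s : seq 'M[C]_(m, n)) :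
  (forall x, x \in s -> \rank x = 1%N) -> (\rank (ssum s) <= size s)%N.
Proof.
elim: s => [|y s IH] /= H; first by rewrite mxrank0.
apply: leq_trans (mxrank_adds_leqif _ _).1 _.
rewrite (H y (mem_head _ _)) add1n ltnS; apply: IH => x hx.
by apply: H; rewrite inE hx orbT.
Qed.

Lemma span_sub m n (S : 'M[C]_(m, n) -> Prop) (s : seq 'M[C]_(m, n)) :
  (forall x, S x <-> x \in s) -> forall M, in_span S M -> (M <= ssum s)%MS.
Proof.
move=> HS M [k [v [c [Hv ->]]]].
apply: summx_sub => i _; apply: scalemx_sub; apply: ssum_sup.
by apply/HS.
Qed.
End S.
Lemma rip_rin (R : rcfType) (m n p r : nat) (A : 'M[R[i]]_(m, n) -> 'cV[R[i]]_p) (d : R) :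
  rip_bound r A d -> forall X, (\rank X <= r)%N ->
  (1 - d) * rin X X <= rin (A X) (A X) <= (1 + d) * rin X X.
Proof. by move=> [_ H] X hX; rewrite -(norm2E (A X)) -(frobE X); exact: H. Qed.

Lemma final_ineq (R : rcfType) (a b d : R) : 0 <= a -> 0 <= b -> 0 <= d ->
  (forall t, 4 * t * a ^+ 2 <= 2 * d * (a ^+ 2 + t ^+ 2 * b ^+ 2)) ->
  a <= Num.sqrt 2 * d * b.
Proof.
move=> a0 b0 d0 H.
have s1 : 1 <= Num.sqrt (2 : R).
  have : Num.sqrt (1:R) <= Num.sqrt 2 by rewrite ler_sqrt //; lra.
  by rewrite sqrtr1.
have adb : a <= d * b.
  have [eb|bpos] := eqVneq b 0.
    have := H (d + 1); rewrite eb => h.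
    have e0 : (d + 1) ^+ 2 * (0:R) ^+ 2 = 0 by ring.
    rewrite e0 addr0 in h.
    have : a ^+ 2 <= 0 by nra.
    rewrite mulr0; nra.
  have bp : 0 < b by rewrite lt_def bpos b0.
  have := H (a / b).
  have e : a / b * b = a by rewrite divfK.
  have t0 : 0 <= a / b by rewrite divr_ge0.
  move: (a / b) e t0 => t e t0 h.
  have h' : 4 * t * a ^+ 2 <= 4 * d * a ^+ 2.
    have e2 : t ^+ 2 * b ^+ 2 = a ^+ 2 by rewrite -e; ring.
    by move: h; rewrite e2; nra.
  have [->|apos] := eqVneq a 0; first by rewrite mulr_ge0.
  have ap : 0 < a by rewrite lt_def apos a0.
  have a2 : 0 < a ^+ 2 by rewrite exprn_gt0.
  have td : t <= d by nra.
  by rewrite -e ler_pM2r.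
by apply: (le_trans adb); rewrite -mulrA ler_peMl // ?mulr_ge0.
Qed.

Unset Implicit Arguments.
Theorem corollary1 (R : rcfType) (m n p r : nat)
  (A : {linear 'M[R[i]]_(m, n) -> 'cV[R[i]]_p})
  (Astar : 'cV[R[i]]_p -> 'M[R[i]]_(m, n)) (delta : R)
  (O Psi Ups : 'M[R[i]]_(m, n) -> Prop)
  (PPsi PUps : 'M[R[i]]_(m, n) -> 'M[R[i]]_(m, n)) (X : 'M[R[i]]_(m, n)) :
  is_adjoint A Astar ->
  is_rip_const r A delta ->
  atom_set O ->
  (forall a, Psi a -> O a) -> (forall a, Ups a -> O a) ->
  is_orth_proj Psi PPsi -> is_orth_proj Ups PUps ->
  (forall Y, PPsi Y - PUps (PPsi Y) = PPsi (Y - PUps Y)) ->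
  X - PUps X = 0 ->
  card_le Psi r ->
  frob (let Z := PPsi (Astar (A (PPsi X))) in Z - PUps Z)
    <= Num.sqrt 2 * delta * frob (PPsi X).
Proof.
move=> Hadj [Hr _]; have [d0 Hrip] := Hr; move: Hadj => Hadj [HO _] HPO _ HPsi HUps Hcomm HX [s [hs Hs]] /=.
have rin0 : forall (M : 'M[R[i]]_(m, n)), rin M 0 = 0.
  by move=> M; rewrite -(subrr M) rinBr subrr.
have P0 : PPsi 0 = 0.
  have [sp op] := HPsi 0.
  have := op _ sp => /(congr1 (@complex.Re R)).
  rewrite -/(rin _ _) sub0r rinNl => /eqP; rewrite oppr_eq0 => /eqP.
  exact: rin_eq0.
set Y := PPsi X; set W := Astar (A Y); set Z := PPsi W; set V := Z - PUps Z.
have hY : Y = PUps Y.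
  by apply/eqP; rewrite -subr_eq0; apply/eqP; rewrite /Y Hcomm HX P0.
have spanV : in_span Psi V by rewrite /V /Z Hcomm; exact: (HPsi _).1.
have spanY : in_span Psi Y by exact: (HPsi _).1.
have o1 : rin V (PUps Z) = 0 by rewrite /rin ((HUps Z).2 _ (HUps Z).1).
have o2 : rin (W - Z) V = 0 by rewrite /rin ((HPsi W).2 _ spanV).
have o3 : rin V Y = 0.
  by rewrite /rin ((HUps Z).2 Y); [|rewrite hY; exact: (HUps Y).1].
have adj : rin (A V) (A Y) = rin V W.
  by rewrite /rin -vinnerE Hadj.
have key : rin V V = rin (A V) (A Y).
  have e1 : rin V V = rin V Z - rin V (PUps Z) by rewrite {2}/V rinBr.
  have e2 := rinBl W Z V.
  rewrite adj e1 o1 (rinC V Z) (rinC V W); move: e2; rewrite o2; lra.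
have rk : forall t : R, (\rank (V + (t%:C)%C *: Y)%R <= r)%N.
  move=> t.
  have sub : ((V + (t%:C)%C *: Y)%R <= ssum s)%MS.
    apply: addmx_sub; last apply: scalemx_sub; exact: span_sub Hs _ _.
  apply: (leq_trans (mxrankS sub)); apply: (leq_trans _ hs).
  apply: ssum_rank => x /Hs /HPO /HO [] //.
have pol : forall t : R, 4 * t * rin V V <= 2 * delta * (rin V V + t ^+ 2 * rin Y Y).
  move=> t.
  have /andP [_ h1] := rip_rin Hr (rk t).
  have /andP [h2 _] := rip_rin Hr (rk (- t)).
  have eA : forall t', A (V + (t'%:C)%C *: Y) = A V + (t'%:C)%C *: A Y.
    by move=> t'; rewrite linearD linearZ.
  move: h1 h2; rewrite !eA !rin_expand o3 -key sqrrN.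
  nra.
have a0 := frob_ge0 V; have b0 := frob_ge0 Y.
have pol' : forall t : R, 4 * t * frob V ^+ 2 <= 2 * delta * (frob V ^+ 2 + t ^+ 2 * frob Y ^+ 2).
  by move=> t; rewrite !frobE.
exact: final_ineq a0 b0 d0 pol'.
Qed.
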